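(* For every $n\ge1$, $4Q_n(x/2)$ is divisible by $(x-2)^2$; writing $4Q_n(x/2)=(x-2)^2R_n(x)$ with $R_n$ a polynomial, one has the factorization \[ \Phi_n(x)=\tilde U^{\mathrm e}_n(x)\cdot 4Q_n\Big(\frac x2\Big)=(x-2)^2\cdot\tilde U^{\mathrm e}_n(x)\cdot R_n(x). \]
   Context: $U_n$ is the Chebyshev polynomial of the second kind, $U_n(\cos\theta)=\sin((n+1)\theta)/\sin\theta$, extended by $U_{-1}=0$, $U_{-2}=-1$; $\tilde U_n(x)=U_n(x/2)$, and $\Phi_n(x)=((n+1)x^2-6x-4n)\tilde U_n(x)+2(x+2)\tilde U_{n-1}(x)+2(x+2)$. $U^{\mathrm e}_n$ is defined by $U^{\mathrm e}_n(\cos\theta)=\frac{\sin((n+1)\theta/2)}{\sin(\theta/2)}$ for $n$ even and $\frac{\sin((n+1)\theta/2)}{\sin\theta}$ for $n$ odd, and $\tilde U^{\mathrm e}_n(x)=U^{\mathrm e}_n(x/2)$. For $k\ge1$, $Q_{2k}(x)=((2k+1)x^2-3x-2k)(U_k(x)-U_{k-1}(x))+(x+1)(U_{k-1}(x)-U_{k-2}(x))$, and for $k\ge0$, $Q_{2k+1}(x)=((2k+2)x^2-3x-2k-1)(U_{k+1}(x)-U_{k-1}(x))+(x+1)(U_k(x)-U_{k-2}(x))$. *)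

(* Defs.v *)
From HB Require Import structures.
From mathcomp Require Import all_boot all_order all_algebra.
Set Implicit Arguments. Unset Strict Implicit. Unset Printing Implicit Defensive.
Import Order.TTheory GRing.Theory Num.Theory.
Local Open Scope ring_scope.

(* Chebyshev polynomials of the second kind U_m, m : nat,
   U_0 = 1, U_1 = 2X, U_{m+2} = 2X U_{m+1} - U_m
   (equivalently U_m(cos t) = sin((m+1)t)/sin t). *)
Fixpoint chebU_pair (R : ringType) (m : nat) : {poly R} * {poly R} :=
  match m with
  | 0%N => (1, 2%:R *: 'X)
  | m'.+1 => let: (a, b) := chebU_pair R m' in (b, 2%:R *: 'X * b - a)
  end.

Definition chebUn (R : ringType) (m : nat) : {poly R} := (chebU_pair R m).1.

(* Integer-indexed extension: U_{-1} = 0, U_{-2} = -1, and in general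
   U_{-m-2} = - U_m (the extension by the three-term recurrence). *)
Definition chebU (R : ringType) (i : int) : {poly R} :=
  match i with
  | Posz m => chebUn R m
  | Negz 0 => 0                     (* i = -1 *)
  | Negz m.+1 => - chebUn R m       (* i = -(m+2) *)
  end.

Definition half_arg (R : fieldType) (p : {poly R}) : {poly R} :=
  p \Po ((2%:R)^-1 *: 'X).

Definition tU (R : fieldType) (i : int) : {poly R} := half_arg (chebU R i).

(* U^e_n : U^e_n(cos t) = sin((n+1)t/2)/sin(t/2) for n even,
   sin((n+1)t/2)/sin t for n odd.  As polynomials:
   n = 2m   : U^e_n = U_m + U_{m-1}   (sin((2m+1)t/2)/sin(t/2) = 1 + 2 sum_{j<=m} cos(jt))
   n = 2m+1 : U^e_n = U_m. *)
Definition chebUe (R : ringType) (n : nat) : {poly R} :=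
  if odd n then chebU R (n./2)%:Z
  else chebU R (n./2)%:Z + chebU R ((n./2)%:Z - 1).

Definition tUe (R : fieldType) (n : nat) : {poly R} := half_arg (chebUe R n).

Definition Phi (R : fieldType) (n : nat) : {poly R} :=
  ((n.+1)%:R *: 'X^2 - 6%:R *: 'X - (4 * n)%:R%:P) * tU R n%:Z
  + 2%:R *: ('X + 2%:R%:P) * tU R (n%:Z - 1)
  + 2%:R *: ('X + 2%:R%:P).

Definition Qpoly (R : ringType) (n : nat) : {poly R} :=
  let k := n./2 in
  let kz := k%:Z in
  if ~~ odd n then
    ((2 * k + 1)%:R *: 'X^2 - 3%:R *: 'X - (2 * k)%:R%:P)
      * (chebU R kz - chebU R (kz - 1))
    + ('X + 1) * (chebU R (kz - 1) - chebU R (kz - 2))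
  else
    ((2 * k + 2)%:R *: 'X^2 - 3%:R *: 'X - (2 * k + 1)%:R%:P)
      * (chebU R (kz + 1) - chebU R (kz - 1))
    + ('X + 1) * (chebU R kz - chebU R (kz - 2)).

(* Main.v *)
Require Import Defs.
From HB Require Import structures.
From mathcomp Require Import all_boot all_order all_algebra.
From mathcomp Require Import ring lra zify.
Import Order.TTheory GRing.Theory Num.Theory.
Local Open Scope ring_scope.

Section S.
Variable R : numFieldType.

Lemma chebUn_rec m : chebUn R m.+2 = 2%:R *: 'X * chebUn R m.+1 - chebUn R m.
Proof.
rewrite /chebUn /=.
have: (chebU_pair R m).1 = chebUn R m by [].
case E: (chebU_pair R m) => [a b] /= _.
by [].
Qed.

Lemma chebUn01 : chebUn R 0 = 1 /\ chebUn R 1 = 2%:R *: 'X.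
Proof. by []. Qed.

Definition w (m : nat) : {poly R} := chebU R (m%:Z - 2).

Lemma w0 : w 0 = -1. Proof. by []. Qed.
Lemma w1 : w 1 = 0. Proof. by []. Qed.
Lemma wS m : w m.+2 = chebUn R m.
Proof. rewrite /w. have -> : (m.+2%:Z - 2 = m%:Z)%R. by rewrite -addn2 PoszD addrK. by []. Qed.

Lemma w_rec m : w m.+2 = 2%:R *: 'X * w m.+1 - w m.
Proof.
case: m => [|[|m]]; rewrite ?wS ?w0 ?w1.
- by rewrite mulr0 sub0r opprK.
- by rewrite mulr1 subr0.
- by rewrite chebUn_rec.
Qed.
Implicit Types (p q : {poly R}) (c : R).
Definition yy : {poly R} := 2%:R^-1 *: 'X.
Lemma two_neq0 : (2%:R : R) != 0. Proof. by rewrite pnatr_eq0. Qed.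
Lemma Xy : 'X = 2%:R * yy.
Proof. by rewrite /yy -scalerAr mulr_natl -scaler_nat scalerA mulVf ?two_neq0 // scale1r. Qed.

Lemma haD p q : half_arg (p + q) = half_arg p + half_arg q. Proof. exact: comp_polyD. Qed.
Lemma haB p q : half_arg (p - q) = half_arg p - half_arg q. Proof. exact: comp_polyB. Qed.
Lemma haM p q : half_arg (p * q) = half_arg p * half_arg q. Proof. exact: comp_polyM. Qed.
Lemma haZ c p : half_arg (c *: p) = c%:P * half_arg p. Proof. by rewrite /half_arg comp_polyZ mul_polyC. Qed.
Lemma haC c : half_arg c%:P = c%:P. Proof. exact: comp_polyC. Qed.
Lemma haX : half_arg ('X : {poly R}) = yy. Proof. exact: comp_polyX. Qed.
Lemma ha1 : half_arg (1 : {poly R}) = 1. Proof. by rewrite -polyC1 haC. Qed.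
Lemma haN p : half_arg (- p) = - half_arg p. Proof. by rewrite -sub0r haB /half_arg comp_poly0 sub0r. Qed.
Lemma haX2 : half_arg ('X^2 : {poly R}) = yy^2. Proof. by rewrite expr2 haM haX -expr2. Qed.

Definition t m := half_arg (w m).

Lemma t0 : t 0 = -1. Proof. by rewrite /t w0 haN ha1. Qed.
Lemma t1 : t 1 = 0. Proof. by rewrite /t w1 /half_arg comp_poly0. Qed.
Lemma t_rec m : t m.+2 = 'X * t m.+1 - t m.
Proof.
by rewrite /t w_rec haB haM haZ haX Xy polyC_natr.
Qed.
Lemma t2 : t 2 = 1. Proof. by rewrite t_rec t1 t0 mulr0 sub0r opprK. Qed.

Lemma t_add a b : t (a + b).+2 = t a.+2 * t b.+2 - t a.+1 * t b.+1.
Proof.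
suff: t (a + b).+2 = t a.+2 * t b.+2 - t a.+1 * t b.+1 /\
      t (a + b.+1).+2 = t a.+2 * t b.+3 - t a.+1 * t b.+2 by case.
elim: b => [|b [IH1 IH2]].
  rewrite addn0 t2 t1 mulr1 mulr0 subr0; split => //.
  by rewrite addn1 (t_rec 1) t2 t1 t_rec; ring.
split; first by [].
have e1 : t (a + b.+2).+2 = 'X * t (a+b.+1).+2 - t (a+b).+2 by rewrite !addnS t_rec.
rewrite e1 IH1 IH2 (t_rec b.+2) (t_rec b.+1); ring.
Qed.

Lemma t_cas m : t m.+1 ^+ 2 - t m.+2 * t m = 1.
Proof.
elim: m => [|m IH]; first by rewrite t1 t2 t0; ring.
rewrite -IH (t_rec m.+1) (t_rec m); ring.
Qed.
Lemma cw0 m : chebU R m%:Z = w m.+2. Proof. by rewrite /w; congr chebU; lia. Qed.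
Lemma cw1 m : chebU R (m%:Z - 1) = w m.+1. Proof. by rewrite /w; congr chebU; lia. Qed.
Lemma cw2 m : chebU R (m%:Z - 2) = w m. Proof. by rewrite /w; congr chebU; lia. Qed.
Lemma cw3 m : chebU R (m%:Z + 1) = w m.+3. Proof. by rewrite /w; congr chebU; lia. Qed.

Arguments w : simpl never.
Arguments t : simpl never.
Arguments yy : simpl never.

Lemma main_id n : (1 <= n)%N -> Phi R n = tUe R n * (4%:R *: half_arg (Qpoly R n)).
Proof.
move=> hn.
have nE := odd_double_half n.
rewrite /Phi /tUe /chebUe /Qpoly /tU /=.
set k := n./2 in nE *.
have C := t_cas k.
case o: (odd n) in nE *; rewrite /= -mul2n in nE; rewrite -nE -!wS !cw1 !cw2 /=.
  rewrite !(haD, haB, haM, haZ, haX, haX2, haC, haN, ha1) -!/(t _).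
  rewrite -!mul_polyC !polyC_natr polyC1 Xy.
  have A : t (1+2*k).+2 = t k.+2 * t k.+3 - t k.+1 * t k.+2.
    by rewrite -t_add; congr t; lia.
  have B : t (1+2*k).+1 = t k.+2 ^+2 - t k.+1 ^+2.
    by rewrite !expr2 -t_add; congr t; lia.
  have D : t (k+1).+2 = 'X * t k.+2 - t k.+1 by rewrite addn1 t_rec.
  rewrite A B D (t_rec k.+1) Xy.
  apply/eqP; rewrite -subr_eq0; apply/eqP.
  transitivity (4%:R * (yy+1) * (1 - (t k.+1 ^+ 2 - t k.+2 * t k))); first ring.
  by rewrite C subrr mulr0.
rewrite !(haD, haB, haM, haZ, haX, haX2, haC, haN, ha1) -!/(t _).
rewrite -!mul_polyC !polyC_natr polyC1 Xy.
have A : t (2*k).+2 = t k.+2 ^+2 - t k.+1 ^+2.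
  by rewrite !expr2 -t_add; congr t; lia.
have B : t (2*k).+1 = t k.+1 * t k.+2 - t k * t k.+1.
  have : (0 < k)%N by lia.
  case: (k) => [//|k'] _.
  by rewrite -t_add; congr t; lia.
rewrite A B.
apply/eqP; rewrite -subr_eq0; apply/eqP.
transitivity (4%:R * (yy+1) * (1 - (t k.+1 ^+ 2 - t k.+2 * t k))); first ring.
by rewrite C subrr mulr0.
Qed.
Lemma three_neq0 : (3%:R : R) != 0. Proof. by rewrite pnatr_eq0. Qed.

Lemma w_at1 m : (w m).[1] = m%:R - 1 /\ (w m)^`().[1] = (m%:R-2) * (m%:R-1) * m%:R / 3%:R.
Proof.
elim/ltn_ind: m => -[|[|m]] IH.
- by rewrite w0 hornerN hornerC derivN derivC hornerN hornerC; split; [ring|ring].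
- by rewrite w1 horner0 deriv0 horner0; split; [ring|ring].
have [a1 b1] := IH m.+1 (ltnSn _).
have [a0 b0] : (w m).[1] = m%:R - 1 /\ (w m)^`().[1] = (m%:R-2) * (m%:R-1) * m%:R / 3%:R.
  by apply: IH; lia.
rewrite w_rec derivB derivM derivZ derivX !hornerE a1 b1 a0 b0.
split; first ring.
by field.
Qed.
Lemma Q_at1 n : (Qpoly R n).[1] = 0 /\ (Qpoly R n)^`().[1] = 0.
Proof.
rewrite /Qpoly.
set k := n./2.
case o: (odd n) => /=; rewrite ?cw1 ?cw2 ?cw3 ?cw0 -?wS expr2;
 rewrite !(derivD, derivB, derivM, derivZ, derivX, derivC, derivN) !(hornerD, hornerN, hornerM, hornerZ, hornerX, hornerC, hornerMn);
 rewrite !(proj1 (w_at1 _)) !(proj2 (w_at1 _)); split; try ring; by field.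
Qed.

Lemma Q_div n : exists S, Qpoly R n = ('X - 1)^+2 * S.
Proof.
have [h0 h1] := Q_at1 n.
have /factor_theorem [q1 E1] : root (Qpoly R n) 1 by apply/eqP.
have : root q1 1.
  apply/eqP; move: h1; rewrite E1 derivM derivXsubC !hornerE.
  by rewrite subrr mulr0 add0r.
move/factor_theorem => [q2 E2].
exists q2; rewrite E1 E2 polyC1; ring.
Qed.
End S.

Theorem theoremB7 (R : numFieldType) (n : nat) (hn : (1 <= n)%N) :
  exists Rn : {poly R},
    4%:R *: half_arg (Qpoly R n) = ('X - 2%:R%:P) ^+ 2 * Rn /\
    Phi R n = tUe R n * (4%:R *: half_arg (Qpoly R n)) /\
    Phi R n = ('X - 2%:R%:P) ^+ 2 * tUe R n * Rn.
Proof.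
have [S ES] := Q_div R n.
have H1 : 4%:R *: half_arg (Qpoly R n) = ('X - 2%:R%:P) ^+ 2 * half_arg S.
  rewrite ES expr2 !(haM, haB, haX, ha1) -mul_polyC !polyC_natr Xy; ring.
exists (half_arg S); split; first exact: H1.
split; first exact: main_id.
by rewrite main_id // H1 mulrCA mulrA.
Qed.
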